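(* Let $G$ be a finite group with $n=|G|$, and let $v(t)$, $t\in\mathbb{N}$, be a random walk on $G$ with step distribution $\gamma$ and uniform initial distribution. Fix, for each equivalence class of irreducible (complex) representations of $G$, one representative $\rho$; write $d_\rho$ for its degree. Suppose the following condition holds: for every function $J_n:G^n\to\mathbb{C}$, if \[ \sum_{\rho_1,\dots,\rho_n} d_{\rho_1}\cdots d_{\rho_n}\,\mathrm{Tr}\Big(\big(\hat\gamma(\rho_1)^{\ell_1}\otimes\cdots\otimes\hat\gamma(\rho_n)^{\ell_n}\big)\,\hat J_n(\rho_1\otimes\cdots\otimes\rho_n)\Big)=0 \] for all positive integers $\ell_1,\dots,\ell_n$ (where $\rho_1,\dots,\rho_n$ each range over all irreducible representations of $G$ up to equivalence), then $J_n(x_1,\dots,x_n)=0$ for all $x_1,\dots,x_n\in G$. Then $v(t)$ is reconstructive, i.e. any scenery $f$ can be reconstructed up to shifts from the distribution of $\{f(v(t))\}_{t=1}^\infty$.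
   Context: A scenery on a finite group $G$ is a function $f:G\to\{0,1\}$. A random walk on $G$ is defined by: $v(1)$ has some distribution, $Z_1,Z_2,\dots$ are i.i.d. random elements of $G$ independent of $v(1)$, and $v(t+1)=Z_t v(t)$ for $t\in\mathbb{N}$; its step distribution is $\gamma(s)=\mathbb{P}(Z_t=s)$. With $v(1)$ uniform on $G$, the walk is called reconstructive if, for any two sceneries $f_1,f_2$, the distributions of $\{f_1(v(t))\}_{t=1}^\infty$ and $\{f_2(v(t))\}_{t=1}^\infty$ are identical only if $f_1$ is a shift of $f_2$, i.e. there exists $g\in G$ with $f_1(k)=f_2(kg)$ for all $k\in G$. For a function $\phi$ on a finite group $H$ and a representation $\rho$ of $H$, the Fourier transform is $\hat\phi(\rho)=\sum_{s\in H}\phi(s)\rho(s)$. For $J_n:G^n\to\mathbb{C}$, $\hat J_n(\rho_1\otimes\cdots\otimes\rho_n)=\sum_{(x_1,\dots,x_n)\in G^n}J_n(x_1,\dots,x_n)\,\rho_1(x_1)\otimes\cdots\otimes\rho_n(x_n)$. *)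

(* Defs.v *)
From HB Require Import structures.
From mathcomp Require Import all_boot all_order all_algebra all_fingroup all_solvable all_field all_character.
Set Implicit Arguments. Unset Strict Implicit. Unset Printing Implicit Defensive.
Import Order.TTheory GRing.Theory Num.Theory.
Local Open Scope ring_scope.

Fixpoint tdim (I : Type) (d : I -> nat) (s : seq I) : nat :=
  match s with [::] => 1%N | a :: s' => (d a * tdim d s')%N end.

Fixpoint tens (I : Type) (d : I -> nat) (F : forall a, 'M[algC]_(d a))
  (s : seq I) : 'M[algC]_(tdim d s) :=
  match s as s0 return 'M[algC]_(tdim d s0) with
  | [::] => 1%:M
  | a :: s' => tprod (F a) (@tens I d F s')
  end.

Definition tensn (n : nat) (d : 'I_n -> nat) (F : forall k, 'M[algC]_(d k)) :
  'M[algC]_(tdim d (enum 'I_n)) := @tens _ d F (enum 'I_n).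

(* The fixed representatives: 'Chi_i for i : Iirr [set: gT]. *)
Definition irrdeg (gT : finGroupType) (i : Iirr [set: gT]) : nat :=
  irr_degree (socle_of_Iirr i).

Definition fourier (gT : finGroupType) (phi : gT -> algC) (i : Iirr [set: gT]) :
  'M[algC]_(irrdeg i) := \sum_(s : gT) phi s *: 'Chi_i s.

Definition fourierN (gT : finGroupType) (n : nat)
  (J : {ffun 'I_n -> gT} -> algC) (r : {ffun 'I_n -> Iirr [set: gT]}) :
  'M[algC]_(tdim (fun k => irrdeg (r k)) (enum 'I_n)) :=
  \sum_(x : {ffun 'I_n -> gT})
     J x *: tensn (fun k => 'Chi_(r k) (x k) : 'M[algC]_(irrdeg (r k))).

Definition is_distribution (gT : finGroupType) (gamma : gT -> algC) : Prop :=
  (forall s, 0 <= gamma s) /\ \sum_(s : gT) gamma s = 1.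

(* Joint law of (v(1), ..., v(m+1)) for the walk v(t+1) = Z_t v(t), with
   v(1) uniform on G and Z_t i.i.d. of law gamma:
   P(v(1)=w_0,...,v(m+1)=w_m) = 1/|G| * prod_{k<m} gamma(w_{k+1} w_k^{-1}). *)
Definition walk_law (gT : finGroupType) (gamma : gT -> algC) (m : nat)
  (w : {ffun 'I_m.+1 -> gT}) : algC :=
  (#|gT|%:R)^-1 *
  \prod_(k < m) gamma (w (lift ord0 k) * (w (widen_ord (leqnSn m) k))^-1)%g.

Definition scenery_fdd (gT : finGroupType) (gamma : gT -> algC) (f : gT -> bool)
  (m : nat) (b : {ffun 'I_m.+1 -> bool}) : algC :=
  \sum_(w : {ffun 'I_m.+1 -> gT} | [forall k, f (w k) == b k]) walk_law gamma w.

(* Two sceneries give the same law of the observed process (a law on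
   {0,1}^N is determined by its finite-dimensional distributions). *)
Definition same_scenery_law (gT : finGroupType) (gamma : gT -> algC)
  (f1 f2 : gT -> bool) : Prop :=
  forall m (b : {ffun 'I_m.+1 -> bool}),
    scenery_fdd gamma f1 b = scenery_fdd gamma f2 b.

Definition is_shift (gT : finGroupType) (f1 f2 : gT -> bool) : Prop :=
  exists g : gT, forall k : gT, f1 k = f2 (k * g)%g.

Definition reconstructive (gT : finGroupType) (gamma : gT -> algC) : Prop :=
  forall f1 f2 : gT -> bool, same_scenery_law gamma f1 f2 -> is_shift f1 f2.

(* Main.v *)
Require Import Defs.
From HB Require Import structures.
From mathcomp Require Import all_boot all_order all_algebra all_fingroup all_solvable all_field all_character.
Import Order.TTheory GRing.Theory Num.Theory.
Local Open Scope ring_scope.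
Set Implicit Arguments. Unset Strict Implicit. Unset Printing Implicit Defensive.
Lemma tens_mul (I : Type) (d : I -> nat) (F G : forall a, 'M[algC]_(d a)) s :
  tens F s *m tens G s = tens (fun a => F a *m G a) s.
Proof.
elim: s => [|a s IH] /=; first by rewrite mul1mx.
by rewrite -tprodE IH.
Qed.

Lemma tens_tr (I : Type) (d : I -> nat) (F : forall a, 'M[algC]_(d a)) s :
  \tr (tens F s) = \prod_(a <- s) \tr (F a).
Proof.
elim: s => [|a s IH] /=; first by rewrite big_nil mxtrace1.
by rewrite mxtrace_prod IH big_cons.
Qed.

Lemma tensn_tr n (d : 'I_n -> nat) (F : forall a, 'M[algC]_(d a)) :
  \tr (tensn F) = \prod_(k < n) \tr (F k).
Proof. by rewrite /tensn tens_tr big_enum. Qed.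

Lemma tensn_mul n (d : 'I_n -> nat) (F G : forall a, 'M[algC]_(d a)) :
  tensn F *m tensn G = tensn (fun a => F a *m G a).
Proof. exact: tens_mul. Qed.

Lemma tr_fourierN (gT : finGroupType) n (J : {ffun 'I_n -> gT} -> algC)
  (r : {ffun 'I_n -> Iirr [set: gT]}) (F : forall k, 'M[algC]_(irrdeg (r k))) :
  \tr (tensn F *m fourierN J r) =
  \sum_x J x * \prod_(k < n) \tr (F k *m 'Chi_(r k) (x k)).
Proof.
rewrite /fourierN mulmx_sumr linear_sum; apply: eq_bigr => x _.
by rewrite -scalemxAr linearZ /= tensn_mul tensn_tr. Qed.

Lemma sum_chi_tr (gT : finGroupType) (y : gT) :
  \sum_(i : Iirr [set: gT]) (irrdeg i)%:R * \tr ('Chi_i y) = #|gT|%:R *+ (y == 1%g).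
Proof.
have := congr1 (fun phi : 'CF([set: gT]) => phi y) (cfReg_sum [set: gT]).
rewrite /= cfRegE cardsT => ->; rewrite sum_cfunE; apply: eq_bigr => i _.
by rewrite cfunE irr1_degree -irrRepr cfunE inE mulr1n.
Qed.
Fixpoint gpow (gT : finGroupType) (gamma : gT -> algC) (l : nat) (y : gT) : algC :=
  match l with
  | 0 => (y == 1%g)%:R
  | l'.+1 => \sum_s gamma s * gpow gamma l' (y * s^-1)%g
  end.

Lemma fourier_pow (gT : finGroupType) (gamma : gT -> algC) (i : Iirr [set: gT]) l :
  fourier gamma i ^+ l = \sum_u gpow gamma l u *: 'Chi_i u.
Proof.
elim: l => [|l IH].
  rewrite expr0 (bigD1 1%g) //= eqxx scale1r big1 ?addr0.
    by rewrite repr_mx1.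
  by move=> u /negbTE ->; rewrite scale0r.
rewrite exprSr IH /fourier -mulmxE mulmx_suml.
rewrite (eq_bigr (fun u => \sum_s (gpow gamma l u * gamma s) *: 'Chi_i (u * s)%g)); last first.
  move=> u _; rewrite -scalemxAl mulmx_sumr scaler_sumr; apply: eq_bigr => s _.
  by rewrite -scalemxAr scalerA repr_mxM ?inE.
rewrite exchange_big /= /=.
symmetry.
rewrite (eq_bigr (fun y => \sum_s (gamma s * gpow gamma l (y * s^-1)%g) *: 'Chi_i y)); last first.
  by move=> y _ /=; rewrite scaler_suml.
rewrite exchange_big /=; apply: eq_bigr => s _.
rewrite (reindex (fun u => (u * s)%g)) /=; last first.
  by exists (fun y => (y * s^-1)%g) => y _; rewrite ?mulgK ?mulgKV.
by apply: eq_bigr => u _; rewrite mulgK mulrC.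
Qed.

Lemma K_formula (gT : finGroupType) (gamma : gT -> algC) l (y : gT) :
  \sum_(i : Iirr [set: gT]) (irrdeg i)%:R * \tr (fourier gamma i ^+ l *m 'Chi_i y)
  = #|gT|%:R * gpow gamma l y^-1.
Proof.
rewrite (eq_bigr (fun i => \sum_u gpow gamma l u * ((irrdeg i)%:R * \tr ('Chi_i (u * y)%g)))); last first.
  move=> i _; rewrite fourier_pow mulmx_suml linear_sum mulr_sumr; apply: eq_bigr => u _.
  by rewrite -scalemxAl linearZ /= repr_mxM ?inE // mulrCA.
rewrite exchange_big /= (bigD1 y^-1%g) //= [X in _ + X]big1.
  by rewrite addr0 -mulr_sumr sum_chi_tr mulVg eqxx mulr1n mulrC.
move=> u neq; rewrite -mulr_sumr sum_chi_tr.
rewrite (_ : (u * y == 1)%g = false) ?mulr0n ?mulr0 //.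
apply/negbTE; apply: contra neq => /eqP h; apply/eqP.
by rewrite -(mulgK y u) h mul1g.
Qed.
Lemma S_formula (gT : finGroupType) (gamma : gT -> algC) n
  (J : {ffun 'I_n -> gT} -> algC) (l : 'I_n -> nat) :
  \sum_(r : {ffun 'I_n -> Iirr [set: gT]})
     (\prod_(k < n) (irrdeg (r k))%:R) *
     \tr (tensn (fun k => fourier gamma (r k) ^+ l k) *m fourierN J r)
  = \sum_x J x * \prod_(k < n) (#|gT|%:R * gpow gamma (l k) (x k)^-1).
Proof.
under eq_bigr => r _ do rewrite tr_fourierN mulr_sumr.
rewrite exchange_big /=; apply: eq_bigr => x _.
under eq_bigr => r _ do rewrite mulrCA.
rewrite -mulr_sumr; congr (_ * _).
symmetry.
under eq_bigr => k _ do rewrite -K_formula.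
rewrite bigA_distr_bigA /=; apply: eq_bigr => r _.
by rewrite big_split.
Qed.
Definition cons_ff (T : finType) n (a : T) (y : {ffun 'I_n -> T}) : {ffun 'I_n.+1 -> T} :=
  [ffun i => if unlift ord0 i is Some j then y j else a].
Definition tail_ff (T : finType) n (x : {ffun 'I_n.+1 -> T}) : {ffun 'I_n -> T} :=
  [ffun j => x (lift ord0 j)].

Lemma cons_ff0 (T : finType) n a (y : {ffun 'I_n -> T}) : cons_ff a y ord0 = a.
Proof. by rewrite ffunE unlift_none. Qed.
Lemma cons_ffS (T : finType) n a (y : {ffun 'I_n -> T}) j : cons_ff a y (lift ord0 j) = y j.
Proof. by rewrite ffunE liftK. Qed.
Lemma tail_cons (T : finType) n a (y : {ffun 'I_n -> T}) : tail_ff (cons_ff a y) = y.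
Proof. by apply/ffunP => j; rewrite ffunE cons_ffS. Qed.

Lemma sum_ffunS (T : finType) n (F : {ffun 'I_n.+1 -> T} -> algC) :
  \sum_x F x = \sum_a \sum_(y : {ffun 'I_n -> T}) F (cons_ff a y).
Proof.
rewrite pair_bigA /= (reindex (fun p : T * {ffun 'I_n -> T} => cons_ff p.1 p.2)) //=.
exists (fun x : {ffun 'I_n.+1 -> T} => (x ord0, tail_ff x)) => [[a y] _|x _] /=.
  by rewrite cons_ff0 tail_cons.
apply/ffunP => i; rewrite ffunE; case: unliftP => [j ->|->] //.
by rewrite ffunE.
Qed.

Lemma sum_ffun0 (T : finType) (F : {ffun 'I_0 -> T} -> algC) y0 :
  \sum_x F x = F y0.
Proof.
rewrite (eq_bigr (fun _ => F y0)); last first.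
  by move=> x _; congr F; apply/ffunP => -[].
by rewrite sumr_const card_ffun card_ord expn0.
Qed.
Definition steps (gT : finGroupType) (gamma : gT -> algC) m (w : {ffun 'I_m.+1 -> gT}) : algC :=
  \prod_(k < m) gamma (w (lift ord0 k) * (w (widen_ord (leqnSn m) k))^-1)%g.
Definition indc (gT : finGroupType) (f : gT -> bool) (c : nat -> bool) m
   (w : {ffun 'I_m.+1 -> gT}) : algC :=
  \prod_(k < m.+1) (if c (val k) then (f (w k))%:R else 1).

Fixpoint Rw (gT : finGroupType) (gamma : gT -> algC) (f : gT -> bool) (c : nat -> bool) m (w : gT) : algC :=
  (if c 0%N then (f w)%:R else 1) *
  match m with 0 => 1 | m'.+1 => \sum_u gamma (u * w^-1)%g * Rw gamma f (fun t => c t.+1) m' u end.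

Lemma steps_cons (gT : finGroupType) (gamma : gT -> algC) m a (y : {ffun 'I_m.+1 -> gT}) :
  steps gamma (cons_ff a y) = gamma (y ord0 * a^-1)%g * steps gamma y.
Proof.
rewrite /steps big_ord_recl; congr (_ * _).
  rewrite cons_ffS (_ : widen_ord _ ord0 = ord0) ?cons_ff0 //; exact: val_inj.
apply: eq_bigr => k _; rewrite cons_ffS.
rewrite (_ : widen_ord _ (lift ord0 k) = lift ord0 (widen_ord (leqnSn m) k)) ?cons_ffS //.
exact: val_inj.
Qed.

Lemma indc_cons (gT : finGroupType) (f : gT -> bool) c m a (y : {ffun 'I_m.+1 -> gT}) :
  indc f c (cons_ff a y) = (if c 0%N then (f a)%:R else 1) * indc f (fun t => c t.+1) y.
Proof.
rewrite /indc big_ord_recl cons_ff0; congr (_ * _).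
by apply: eq_bigr => k _; rewrite cons_ffS.
Qed.

Lemma lemA (gT : finGroupType) (gamma : gT -> algC) (f : gT -> bool) m :
  forall c (h : gT -> algC),
  \sum_(w : {ffun 'I_m.+1 -> gT}) h (w ord0) * indc f c w * steps gamma w
  = \sum_a h a * Rw gamma f c m a.
Proof.
elim: m => [|m IH] c h.
  rewrite sum_ffunS; apply: eq_bigr => a _.
  rewrite (sum_ffun0 _ [ffun i => a]) cons_ff0 /indc /steps big_ord0 big_ord1 cons_ff0 /=.
  by rewrite !mulr1.
rewrite sum_ffunS; apply: eq_bigr => a _ /=.
under eq_bigr => y _ do rewrite cons_ff0 indc_cons steps_cons.
rewrite -(IH _ (fun u => gamma (u * a^-1)%g)) !mulr_sumr; apply: eq_bigr => y _.
by rewrite !mulrA; congr (_ * _); rewrite -!mulrA; congr (_ * (_ * _)); rewrite mulrC.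
Qed.
Lemma indc_bool (gT : finGroupType) (f : gT -> bool) c m (w : {ffun 'I_m.+1 -> gT}) :
  indc f c w = ([forall k, c (val k) ==> f (w k)])%:R.
Proof.
case: forallP => [H|H].
  by rewrite /indc big1 // => k _; have := H k; case: (c k) => //= ->.
have [k] : exists k, ~~ (c (val k) ==> f (w k)).
  by apply/existsP; rewrite -negb_forall; apply/forallP.
rewrite negb_imply => /andP[ck /negbTE fk].
by rewrite /indc (bigD1 k) //= ck fk mul0r.
Qed.

Lemma fdd_sum (gT : finGroupType) (gamma : gT -> algC) (f : gT -> bool) c m :
  \sum_(b : {ffun 'I_m.+1 -> bool}) ([forall k, c (val k) ==> b k])%:R * scenery_fdd gamma f b
  = \sum_(w : {ffun 'I_m.+1 -> gT}) indc f c w * walk_law gamma w.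
Proof.
rewrite /scenery_fdd; under eq_bigr do rewrite mulr_sumr big_mkcond /=.
rewrite exchange_big /=; apply: eq_bigr => w _.
rewrite (bigD1 [ffun k => f (w k)]) //= big1 ?addr0.
  rewrite (_ : [forall k, _] = true); last by apply/forallP => k; rewrite ffunE.
  rewrite indc_bool; congr ((nat_of_bool _)%:R * _).
  by apply/idP/idP => /forallP H; apply/forallP => k; have := H k; rewrite ffunE.
move=> b nb; case: ifP => // /forallP H; case/eqP: nb.
by apply/ffunP => k; rewrite ffunE; apply/esym/eqP/H.
Qed.

Lemma law_R (gT : finGroupType) (gamma : gT -> algC) (f1 f2 : gT -> bool) :
  same_scenery_law gamma f1 f2 ->
  forall c m, \sum_a Rw gamma f1 c m a = \sum_a Rw gamma f2 c m a.
Proof.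
move=> H c m.
have E f : \sum_a Rw gamma f c m a = #|gT|%:R * \sum_(w : {ffun 'I_m.+1 -> gT}) indc f c w * walk_law gamma w.
  transitivity (\sum_a (fun _ => 1) a * Rw gamma f c m a); first by apply: eq_bigr => a _; rewrite mul1r.
  rewrite -lemA.
  rewrite mulr_sumr; apply: eq_bigr => w _; rewrite mul1r /walk_law.
  rewrite mulrCA mulVKf //.
  by rewrite pnatr_eq0 -lt0n; apply/card_gt0P; exists 1%g.
by rewrite !E -!fdd_sum; congr (_ * _); apply: eq_bigr => b _; rewrite H.
Qed.
Lemma Rw_ext (gT : finGroupType) (gamma : gT -> algC) (f : gT -> bool) m :
  forall (c1 c2 : nat -> bool) w, (forall t, c1 t = c2 t) ->
  Rw gamma f c1 m w = Rw gamma f c2 m w.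
Proof.
elim: m => [|m IH] c1 c2 w E /=; first by rewrite E.
rewrite E; congr (_ * _); apply: eq_bigr => u _; congr (_ * _); exact: IH.
Qed.

Lemma g_step (gT : finGroupType) (gamma : gT -> algC) l (w w' : gT) :
  \sum_u gamma (u * w^-1)%g * gpow gamma l (w' * u^-1)%g = gpow gamma l.+1 (w' * w^-1)%g.
Proof.
rewrite /=; symmetry; rewrite (reindex (fun u => (u * w^-1)%g)) /=; last first.
  by exists (fun s => (s * w)%g) => s _; rewrite ?mulgK ?mulgKV.
apply: eq_bigr => u _; congr (_ * gpow _ _ _).
by rewrite invMg invgK mulgA mulgKV.
Qed.

Lemma lemBp (gT : finGroupType) (gamma : gT -> algC) (f : gT -> bool) l :
  forall c m w, (forall t, (t < l)%N -> c t = false) ->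
  Rw gamma f c (l + m) w =
  \sum_w' gpow gamma l (w' * w^-1)%g * Rw gamma f (fun t => c (t + l)%N) m w'.
Proof.
elim: l => [|l IH] c m w Hc.
  rewrite (bigD1 w) //= mulgV eqxx mul1r big1 ?addr0.
    by apply: Rw_ext => t; rewrite addn0.
  move=> u nu; rewrite (_ : (u * w^-1 == 1)%g = false) ?mul0r //.
  by apply/negbTE; rewrite -eq_mulgV1.
rewrite addSn /= Hc // mul1r.
have Hc' : forall t, (t < l)%N -> c t.+1 = false by move=> t lt; apply: Hc.
under eq_bigr => u _ do rewrite (IH _ _ _ Hc') mulr_sumr.
rewrite exchange_big /=; apply: eq_bigr => w' _.
have := g_step gamma l w w'; rewrite /= => <-; rewrite mulr_suml; apply: eq_bigr => u _.
rewrite mulrA; congr (_ * _); apply: Rw_ext => t; by rewrite addnS.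
Qed.
Fixpoint Dch (gT : finGroupType) (gamma : gT -> algC) (f : gT -> bool) n (l : nat -> nat) (w : gT) : algC :=
  (f w)%:R * match n with 0 => 1
  | n'.+1 => \sum_w' gpow gamma (l 0%N) (w' * w^-1)%g * Dch gamma f n' (fun t => l t.+1) w' end.

Fixpoint cset n (l : nat -> nat) (t : nat) : bool :=
  match n with
  | 0 => t == 0%N
  | n'.+1 => (t == 0%N) || ((l 0%N <= t)%N && cset n' (fun s => l s.+1) (t - l 0%N))
  end.

Lemma Rw_S (gT : finGroupType) (gamma : gT -> algC) (f : gT -> bool) c m w :
  Rw gamma f c m.+1 w = (if c 0%N then (f w)%:R else 1) *
    \sum_u gamma (u * w^-1)%g * Rw gamma f (fun t => c t.+1) m u.
Proof. by []. Qed.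

Lemma Dch_S (gT : finGroupType) (gamma : gT -> algC) (f : gT -> bool) n l w :
  Dch gamma f n.+1 l w = (f w)%:R *
    \sum_w' gpow gamma (l 0%N) (w' * w^-1)%g * Dch gamma f n (fun t => l t.+1) w'.
Proof. by []. Qed.

Lemma lemB (gT : finGroupType) (gamma : gT -> algC) (f : gT -> bool) n :
  forall (l : nat -> nat) w, (forall k, (k < n)%N -> (0 < l k)%N) ->
  Rw gamma f (cset n l) (\sum_(k < n) l k)%N w = Dch gamma f n l w.
Proof.
elim: n => [|n IH] l w Hl.
  by rewrite big_ord0 /= !mulr1.
have Es : (\sum_(k < n.+1) l k = l 0%N + \sum_(k < n) l k.+1)%N by rewrite big_ord_recl.
rewrite Es Dch_S.
have := Hl 0%N isT; case E: (l 0%N) => [|p] // _.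
rewrite addSn Rw_S.
rewrite (_ : cset n.+1 l 0 = true) //; congr (_ * _).
have Hc : forall t, (t < p)%N -> cset n.+1 l t.+1 = false.
  by move=> t lt /=; rewrite E ltnS leqNgt lt.
under eq_bigr => u _ do rewrite (@lemBp _ _ _ _ _ _ _ Hc) mulr_sumr.
rewrite exchange_big /=; apply: eq_bigr => w' _.
rewrite -(IH (fun t => l t.+1)); last by move=> k lt; apply: Hl.
have := g_step gamma p w w'; rewrite /= => <-; rewrite mulr_suml.
apply: eq_bigr => u _; rewrite mulrA; congr (_ * _).
apply: Rw_ext => t /=; rewrite E ltnS leq_addl /=.
by rewrite subSS addnK.
Qed.
Fixpoint Ech (gT : finGroupType) (f : gT -> bool) n : {ffun 'I_n -> gT} -> gT -> algC :=
  match n with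
  | 0 => fun _ w => (f w)%:R
  | n'.+1 => fun x w => (f w)%:R * Ech f (tail_ff x) ((x ord0)^-1 * w)%g
  end.

Lemma Ech_S (gT : finGroupType) (f : gT -> bool) n (x : {ffun 'I_n.+1 -> gT}) w :
  Ech f x w = (f w)%:R * Ech f (tail_ff x) ((x ord0)^-1 * w)%g.
Proof. by []. Qed.

Lemma lemE (gT : finGroupType) (gamma : gT -> algC) (f : gT -> bool) n :
  forall (l : nat -> nat) w, Dch gamma f n l w =
  \sum_(x : {ffun 'I_n -> gT}) Ech f x w * \prod_(k < n) gpow gamma (l k) (x k)^-1.
Proof.
elim: n => [|n IH] l w.
  by rewrite (sum_ffun0 _ [ffun i => w]) big_ord0 /= !mulr1.
rewrite Dch_S sum_ffunS.
rewrite (reindex (fun a => (a^-1 * w)%g)) /=; last first.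
  by exists (fun w' => (w * w'^-1)%g) => a _; rewrite ?invMg ?invgK ?mulgKV ?mulKVg // mulgA mulgV mul1g.
rewrite mulr_sumr; apply: eq_bigr => a _.
rewrite IH mulr_sumr mulr_sumr; apply: eq_bigr => y _.
rewrite tail_cons cons_ff0 big_ord_recl cons_ff0.
under [X in _ = _ * (_ * X)]eq_bigr => k _ do rewrite cons_ffS.
rewrite mulgK.
by rewrite -!mulrA; congr (_ * _); rewrite mulrCA; congr (_ * _).
Qed.
Definition xP (gT : finGroupType) n (P : nat -> gT) : {ffun 'I_n -> gT} :=
  [ffun k : 'I_n => (P k * (P k.+1)^-1)%g].

Lemma Ech_path (gT : finGroupType) (f : gT -> bool) n :
  forall (P : nat -> gT) g,
  Ech f (xP n P) (P 0%N * g)%g = \prod_(k < n.+1) (f (P k * g)%g)%:R.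
Proof.
elim: n => [|n IH] P g.
  by rewrite big_ord1.
rewrite Ech_S big_ord_recl; congr (_ * _).
have -> : tail_ff (xP n.+1 P) = xP n (fun t => P t.+1).
  by apply/ffunP => k; rewrite !ffunE.
rewrite ffunE /= invMg invgK -mulgA mulKg (IH (fun t => P t.+1)).
by [].
Qed.

Lemma Ech_ge0 (gT : finGroupType) (f : gT -> bool) n :
  forall (x : {ffun 'I_n -> gT}) w, 0 <= Ech f x w.
Proof.
elim: n => [|n IH] x w /=; first exact: ler0n.
by rewrite mulr_ge0 ?ler0n.
Qed.

Lemma sum_bool (gT : finGroupType) (f : gT -> bool) :
  \sum_a (f a)%:R = (#|[set k | f k]|)%:R :> algC.
Proof.
rewrite -sum1_card natr_sum [RHS]big_mkcond /=; apply: eq_bigr => a _.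
by rewrite inE; case: (f a).
Qed.
Theorem theorem1 (gT : finGroupType) (gamma : gT -> algC) :
  is_distribution gamma ->
  (forall J : {ffun 'I_#|gT| -> gT} -> algC,
     (forall l : 'I_#|gT| -> nat, (forall k, (0 < l k)%N) ->
        \sum_(r : {ffun 'I_#|gT| -> Iirr [set: gT]})
           (\prod_(k < #|gT|) (irrdeg (r k))%:R) *
           \tr (tensn (fun k => fourier gamma (r k) ^+ l k) *m fourierN J r)
        = 0) ->
     forall x, J x = 0) ->
  reconstructive gamma.
Proof.
move=> _ H f1 f2 Hlaw.
have HR := law_R Hlaw.
have Hcard : #|[set k | f1 k]| = #|[set k | f2 k]|.
  have := HR (fun t => t == 0%N) 0%N.
  rewrite (eq_bigr (fun a => (f1 a)%:R)); last by move=> a _; rewrite /= mulr1.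
  rewrite [X in _ = X -> _](eq_bigr (fun a => (f2 a)%:R)); last by move=> a _; rewrite /= mulr1.
  by rewrite !sum_bool => /eqP; rewrite eqr_nat => /eqP.
have HD : forall l : 'I_#|gT| -> nat, (forall k, 0 < l k)%N ->
   \sum_a Dch gamma f1 #|gT| (fun t => odflt 1%N (omap l (insub t))) a
   = \sum_a Dch gamma f2 #|gT| (fun t => odflt 1%N (omap l (insub t))) a.
  move=> l Hl.
  have Hl' : forall k, (k < #|gT|)%N -> (0 < odflt 1%N (omap l (insub k)))%N.
    by move=> k _; case: insubP => //= k' _ _; exact: Hl.
  under eq_bigr => a _ do rewrite -(lemB gamma f1 a Hl').
  under [X in _ = X]eq_bigr => a _ do rewrite -(lemB gamma f2 a Hl').
  exact: HR.
pose J := fun x : {ffun 'I_#|gT| -> gT} => \sum_a (Ech f1 x a - Ech f2 x a).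
have HJ : forall x, J x = 0.
  apply: H => l Hl.
  rewrite S_formula.
  under eq_bigr => x _ do rewrite big_split /= prodr_const card_ord mulrCA.
  rewrite -mulr_sumr.
  apply/eqP; rewrite mulf_eq0; apply/orP; right; apply/eqP.
  rewrite -[RHS](subrr (\sum_a Dch gamma f2 #|gT| (fun t => odflt 1%N (omap l (insub t))) a)).
  rewrite -{1}(HD l Hl).
  under [X in _ = X - _]eq_bigr => a _ do rewrite lemE.
  under [X in _ = _ - X]eq_bigr => a _ do rewrite lemE.
  rewrite /J /=; under eq_bigr => x _ do rewrite mulr_suml.
  rewrite exchange_big /= -sumrB; apply: eq_bigr => a _.
  rewrite -sumrB; apply: eq_bigr => x _; rewrite mulrBl.
  have -> : \prod_(k < #|gT|) gpow gamma (odflt 1%N (omap l (insub (val k)))) (x k)^-1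
          = \prod_(k < #|gT|) gpow gamma (l k) (x k)^-1.
    by apply: eq_bigr => k _; rewrite valK.
  by [].
have Heq : forall x : {ffun 'I_#|gT| -> gT}, \sum_a Ech f1 x a = \sum_a Ech f2 x a.
  by move=> x; have := HJ x; rewrite /J /= sumrB => /eqP; rewrite subr_eq0 => /eqP.
case: (pickP [pred k | f1 k]) => [w0 /= fw0|none]; last first.
  exists 1%g => k; rewrite mulg1.
  have E2 : [set k | f2 k] = set0.
    apply: cards0_eq; rewrite -Hcard; apply/eqP; rewrite cards_eq0; apply/eqP/setP => k'.
    by rewrite !inE; apply: none.
  have := in_set0 k; rewrite -E2 inE => ->.
  exact: (none k).
set e := enum [set k | f1 k].
pose P := fun t : nat => if t is t'.+1 then nth w0 e t' else w0.
pose x := xP #|gT| P.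
have HP : forall t, f1 (P t).
  case=> //= t'; case: (ltnP t' (size e)) => [lt|ge].
    by have := mem_nth w0 lt; rewrite mem_enum inE.
  by rewrite nth_default.
have pos : \sum_a Ech f1 x a != 0.
  rewrite (bigD1 w0) //=.
  have -> : Ech f1 x w0 = 1.
    have := Ech_path f1 #|gT| P 1%g; rewrite mulg1 => ->.
    by apply: big1 => k _; rewrite mulg1 HP.
  apply: lt0r_neq0; rewrite ltr_wpDr ?ltr01 //.
  by apply: sumr_ge0 => a _; exact: Ech_ge0.
rewrite Heq in pos.
have [w' nz] : exists w', Ech f2 x w' != 0.
  apply/existsP; apply: contraR pos => /existsPn Hn; apply/eqP.
  by apply: big1 => a _; apply/eqP; move: (Hn a); rewrite negbK.
pose g := (w0^-1 * w')%g.
have Hf2 : forall t, (t <= #|gT|)%N -> f2 (P t * g)%g.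
  move: nz; rewrite -(mulKVg w0 w') (Ech_path f2 #|gT| P g).
  move/prodf_neq0 => Hk t le; have := Hk (Ordinal (le : (t < #|gT|.+1)%N)) isT.
  by rewrite pnatr_eq0 eqb0 negbK.
have Hsub : forall k, f1 k -> f2 (k * g)%g.
  move=> k fk; have ke : k \in e by rewrite mem_enum inE.
  have := Hf2 (index k e).+1; rewrite /= nth_index //; apply.
  by apply: (leq_trans _ (max_card [set k | f1 k])); rewrite cardE index_mem.
exists g => k.
have Eimg : [set (k * g)%g | k in [set k | f1 k]] = [set k | f2 k].
  apply/eqP; rewrite eqEcard card_imset; last exact: (mulIg g).
  rewrite -Hcard leqnn andbT; apply/subsetP => y /imsetP [k' k'in ->].
  by rewrite inE; apply: Hsub; rewrite inE in k'in.
apply/idP/idP => [fk|f2k]; first exact: Hsub.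
have : (k * g)%g \in [set k | f2 k] by rewrite inE.
rewrite -Eimg => /imsetP [k' k'in /(mulIg g) ->].
by rewrite inE in k'in.
Qed.
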